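(* Let $m\ge 1$ and $n\ge 3$ be odd integers, $k=1$, and $g\ge3$. Then an $RSM_\Gamma(\Gamma,g;[\,^{8mn-1}m,\ ^{1}2n])$ exists.
   Context: Here $G=\mathbb{Z}_m\times\mathbb{Z}_{4n}$ and $\Gamma$ is the generalized dihedral group on $G$: underlying set $G\times\mathbb{Z}_2$ with operation $(x,\tau)+(x',\tau')=(x+(-1)^\tau x',\tau+\tau')$. $[\,^{a}x,\,^{b}y]$ denotes the multiset with $a$ copies of $x$ and $b$ copies of $y$. An $RSM_\Gamma(\Gamma,g;L)$, for a list $L$ of $|\Gamma|$ positive integers, is a $|\Gamma|\times g$ matrix with entries in $\Gamma$ such that each column is a permutation (arrangement) of $\Gamma$ and the multiset of orders of the left-to-right row sums equals $L$. *)

(* Defs.v *)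
From HB Require Import structures.
From mathcomp Require Import all_boot all_order all_algebra all_fingroup.
Set Implicit Arguments. Unset Strict Implicit. Unset Printing Implicit Defensive.
Import GRing.Theory.

(* Z_m for m >= 1, as a finite Z-module: the ordinals 'I_m with addition mod m.
   (For m >= 1, (m.-1).+1 = m.)  Note: 'I_k.+1 carries a canonical finZmodType. *)
Definition Zmod (m : nat) : finZmodType := 'I_(m.-1).+1.

(* The generalized dihedral group Dih(G) on an abelian group G:
   underlying set G x Z_2 (here bool), with
   (x,t) . (x',t') = (x + (-1)^t x', t + t'). *)
Section GenDihedral.
Local Open Scope ring_scope.
Variable G : finZmodType.

Definition gdihedral : Type := (G * bool)%type.
HB.instance Definition _ := Finite.on gdihedral.

Definition sgn_act (t : bool) (x : G) : G := if t then - x else x.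

Definition gd_mul (a b : gdihedral) : gdihedral :=
  (a.1 + sgn_act a.2 b.1, addb a.2 b.2).
Definition gd_one : gdihedral := (0, false).
Definition gd_inv (a : gdihedral) : gdihedral :=
  (if a.2 then a.1 else - a.1, a.2).

Lemma gd_mulA : associative gd_mul.
Proof.
move=> a b c; case: a => x t; case: b => y s; case: c => z r.
rewrite /gd_mul /sgn_act /=; congr pair; last by rewrite addbA.
by case: t; case: s => /=; rewrite ?opprD ?opprK addrA.
Qed.

Lemma gd_mul1 : left_id gd_one gd_mul.
Proof. by move=> a; case: a => x t; rewrite /gd_mul /= add0r. Qed.

Lemma gd_mulV : left_inverse gd_one gd_inv gd_mul.
Proof.
move=> a; case: a => x t; rewrite /gd_mul /gd_inv /sgn_act /= addbb.
by case: t; rewrite ?addrN ?addNr.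
Qed.

HB.instance Definition _ :=
  Finite_isGroup.Build gdihedral gd_mulA gd_mul1 gd_mulV.
End GenDihedral.

Definition ZmZ4n (m n : nat) : Type := (Zmod m * Zmod (4 * n))%type.
HB.instance Definition _ m n := GRing.Zmodule.on (ZmZ4n m n).
HB.instance Definition _ m n := Finite.on (ZmZ4n m n).

Definition Gamma (m n : nat) : finGroupType := gdihedral (ZmZ4n m n).

(* RSM_Gamma(Gamma, g; L): a |Gamma| x g matrix with entries in Gamma, each
   column an arrangement (bijective listing) of Gamma, such that the multiset of
   the orders of the left-to-right row sums (products, in multiplicative
   notation) equals L. *)
Definition is_RSM (gT : finGroupType) (g : nat)
    (M : 'M[gT]_(#|gT|, g)) (L : seq nat) : Prop :=
  (forall j : 'I_g, injective (fun i : 'I_#|gT| => M i j)) /\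
  perm_eq [seq #[(\prod_(j < g) M i j)%g]%g | i <- enum 'I_#|gT|] L.

Definition RSM_exists (gT : finGroupType) (g : nat) (L : seq nat) : Prop :=
  exists M : 'M[gT]_(#|gT|, g), is_RSM M L.

(* Main.v *)
Require Import Defs.
From mathcomp Require Import all_boot all_order all_algebra all_fingroup.
From mathcomp Require Import cyclic.
Set Implicit Arguments. Unset Strict Implicit. Unset Printing Implicit Defensive.
Import GRing.Theory.

Lemma valMn (p : nat) (a : 'I_p.+1) k : val (a *+ k)%R = ((val a * k) %% p.+1)%N.
Proof. by rewrite Zp_mulrn. Qed.

Lemma ZvalD k (Hk : 0 < k) (a b : Zmod k) : val (a + b)%R = ((val a + val b) %% k)%N.
Proof. by case: k Hk a b. Qed.
Lemma ZvalN k (Hk : 0 < k) (a : Zmod k) : val (- a)%R = ((k - val a) %% k)%N.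
Proof. by case: k Hk a. Qed.
Lemma ZvalMn k (Hk : 0 < k) (a : Zmod k) j : val (a *+ j)%R = ((val a * j) %% k)%N.
Proof. case: k Hk a => // k _ a; exact: valMn. Qed.
Lemma ZvalInZp k (Hk : 0 < k) j : val (inZp j : Zmod k) = (j %% k)%N.
Proof. by case: k Hk. Qed.
Lemma Zval0 k : val (0 : Zmod k)%R = 0%N.
Proof. by []. Qed.
Lemma Zlt k (a : Zmod k) (Hk : 0 < k) : val a < k.
Proof. by case: k Hk a => // k _ a; exact: ltn_ord. Qed.

Lemma mulrn_mod (V : zmodType) (x : V) N k : (x *+ N = 0)%R -> (x *+ k = x *+ (k %% N))%R.
Proof.
move=> H; rewrite {1}(divn_eq k N) mulrnDr mulnC mulrnA H mul0rn add0r.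
by [].
Qed.

Lemma Zdbl_inj k (a : Zmod k) : 0 < k -> odd k -> (a *+ 2)%R = 0%R -> a = 0%R.
Proof.
move=> Hk op H; have H1 : ((val a * 2) %% k = 0)%N by rewrite -ZvalMn // H.
have H2 : k %| val a * 2 by apply/eqP.
have H3 : k %| nat_of_ord a by rewrite -(@Gauss_dvdl _ _ 2) // coprimen2.
suff h : nat_of_ord a = 0%N by apply: val_inj.
have Ha : nat_of_ord a < k := Zlt a Hk; move: Ha H3; case: (nat_of_ord a) => // j Hj H4.
by have := dvdn_leq (ltn0Sn j) H4; rewrite leqNgt Hj.
Qed.

Definition D4 : finGroupType := gdihedral (Zmod 4).

Definition sgz (t : bool) : int := if t then (-1)%R else 1%R.
Definition spec := (int * int * int * D4)%type.
Definition Lsum (s : seq spec) : int := foldr (fun e acc => e.1.1.1 + sgz e.2.2 * acc)%R 0%R s.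
Definition Csum (s : seq spec) : int := foldr (fun e acc => e.1.1.2 + sgz e.2.2 * acc)%R 0%R s.
Definition Psum (s : seq spec) : int := foldr (fun e acc => e.1.2 + sgz e.2.2 * acc)%R 0%R s.
Definition dprodS (s : seq spec) : D4 := foldr (fun e acc => e.2 * acc)%g 1%g s.


Definition dec (c : nat) : D4 := (inZp c, 4 <= c).
Definition code (d : D4) : nat := val d.1 + 4 * d.2.
Lemma decK d : dec (code d) = d.
Proof.
case: d => [[i Hi] t]; apply/eqP; case: i Hi => [|[|[|[|i]]]] Hi //; case: t => //.
Qed.
Definition all8 : seq D4 := map dec (iota 0 8).
Lemma all8P d : d \in all8.
Proof.
rewrite -(decK d); apply: map_f; rewrite mem_iota /code add0n.
by case: d => [[i Hi] t]; case: i Hi => [|[|[|[|i]]]] Hi //; case: t.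
Qed.

Record design := Design { dJ : nat; dD : seq (seq nat); dS : seq (seq nat);
  dL : seq (seq int); dC : seq (seq int); dstar : nat }.
Section Tab.
Variable des : design.
Definition tabD j d := dec (nth 0 (nth [::] (dD des) j) (code d)).
Definition tabS j d := dec (nth 0 (nth [::] (dS des) j) (code d)).
Definition tabL j d := nth 0%R (nth [::] (dL des) j) (code d).
Definition tabC j d := nth 0%R (nth [::] (dC des) j) (code d).
Definition tabP (j : nat) : int := if j == 0 then 1%R else 0%R.
Definition specB (b : bool) j d : spec :=
  let d' := if b then tabS j d else d in (tabL j d, tabC j d', tabP j, tabD j d').
Definition specs b d := [seq specB b j d | j <- iota 0 (dJ des)].
Definition zD : D4 := dec 2.
Definition chk_inj := all (fun j => all (fun d1 => all (fun d2 =>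
   ((tabD j d1 == tabD j d2) ==> (d1 == d2)) && ((tabS j d1 == tabS j d2) ==> (d1 == d2)))
   all8) all8) (iota 0 (dJ des)).
Definition chk_lam := all (fun j => all (fun d => tabL j d \in [:: 1; -1; 2; -2]%R) all8)
   (iota 0 (dJ des)).
Definition chk_nonS := all (fun d => let s := specs false d in
   [&& Lsum s == 0%R, Csum s == 0%R, Psum s == 1%R & dprodS s == 1%g]) all8.
Definition chk_S := all (fun d => let s := specs true d in
   [&& Csum s == (if d == dec (dstar des) then 2 else 0)%R, Psum s == 1%R &
       dprodS s == if d == dec (dstar des) then zD else 1%g]) all8.
Definition chk_all := [&& chk_inj, chk_lam, chk_nonS & chk_S].
End Tab.

Definition desO := Design 3
 [:: [:: 0; 1; 2; 3; 4; 5; 6; 7]; [:: 2; 6; 4; 0; 3; 1; 5; 7]; [:: 2; 7; 6; 1; 5; 4; 3; 0]]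
 [:: [:: 0; 1; 2; 3; 4; 5; 6; 7]; [:: 5; 1; 2; 3; 4; 6; 0; 7]; [:: 6; 1; 2; 3; 4; 0; 5; 7]]
 [:: [:: Posz 1; Posz 1; Posz 1; Posz 1; Posz 1; Posz 1; Posz 1; Posz 1]; [:: Posz 1; Posz 1; Posz 1; Posz 1; Negz 0; Negz 0; Negz 0; Negz 0]; [:: Negz 1; Posz 2; Posz 2; Negz 1; Posz 2; Posz 2; Negz 1; Negz 1]]
 [:: [:: Negz 0; Posz 0; Posz 0; Posz 0; Posz 0; Posz 1; Posz 0; Posz 0]; [:: Posz 0; Posz 0; Posz 0; Posz 0; Posz 0; Posz 1; Posz 0; Posz 0]; [:: Posz 1; Posz 0; Posz 0; Posz 0; Posz 0; Posz 0; Posz 0; Posz 0]]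
 5.
Definition desE := Design 4
 [:: [:: 0; 1; 2; 3; 4; 5; 6; 7]; [:: 0; 3; 2; 1; 4; 5; 6; 7]; [:: 4; 0; 6; 1; 3; 7; 2; 5]; [:: 4; 0; 6; 3; 1; 7; 2; 5]]
 [:: [:: 0; 1; 2; 3; 4; 5; 6; 7]; [:: 1; 7; 2; 3; 4; 5; 6; 0]; [:: 7; 0; 2; 3; 4; 5; 6; 1]; [:: 0; 1; 2; 3; 4; 5; 6; 7]]
 [:: [:: Posz 1; Posz 1; Posz 1; Posz 1; Posz 1; Posz 1; Posz 1; Posz 1]; [:: Posz 1; Posz 1; Posz 1; Posz 1; Posz 1; Posz 1; Posz 1; Posz 1]; [:: Negz 0; Negz 0; Negz 0; Negz 0; Posz 1; Posz 1; Posz 1; Posz 1]; [:: Posz 1; Negz 0; Posz 1; Negz 0; Negz 0; Posz 1; Negz 0; Posz 1]]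
 [:: [:: Posz 1; Posz 1; Posz 0; Posz 0; Posz 0; Posz 0; Posz 0; Posz 0]; [:: Negz 1; Negz 0; Posz 0; Posz 0; Posz 0; Posz 0; Posz 0; Posz 0]; [:: Posz 1; Posz 0; Posz 0; Posz 0; Posz 0; Posz 0; Posz 0; Posz 0]; [:: Posz 0; Posz 0; Posz 0; Posz 0; Posz 0; Posz 0; Posz 0; Posz 0]]
 7.
Lemma chkO : chk_all desO. Proof. vm_compute. reflexivity. Qed.
Lemma chkE : chk_all desE. Proof. vm_compute. reflexivity. Qed.

Section Constr.
Variables (m n : nat).
Hypotheses (Hm : 0 < m) (Hmo : odd m) (Hn : 2 < n) (Hno : odd n).

Local Notation Gam := (Gamma m n).
Local Notation G := (ZmZ4n m n).
Local Notation K := (Zmod m * Zmod n)%type.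

Lemma Hn0 : 0 < n. Proof. by apply: leq_trans Hn. Qed.
Lemma H4n : 0 < 4 * n. Proof. by rewrite muln_gt0 Hn0. Qed.

Definition rot (x : G) : Gam := (x, false).
Definition four : Zmod (4 * n) := inZp 4.
Definition k2 (c : Zmod n) : Zmod (4 * n) := (four *+ val c)%R.
Definition kap (k : K) : G := (k.1, k2 k.2).
Definition nZ : Zmod (4 * n) := inZp n.
Definition io (d : D4) : Gam := ((0, nZ *+ val d.1)%R, d.2).
Definition gam (x : K * D4) : Gam := (rot (kap x.1) * io x.2)%g.

Lemma val_four : val four = 4%N.
Proof. by rewrite ZvalInZp ?H4n // modn_small // -{1}(muln1 4) ltn_pmul2l // ltnW. Qed.
Lemma val_nZ : val nZ = n.
Proof. by rewrite ZvalInZp ?H4n // modn_small // -{1}(mul1n n) ltn_pmul2r ?Hn0. Qed.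

Lemma four_n : (four *+ n = 0)%R.
Proof. by apply: val_inj; rewrite ZvalMn ?H4n // val_four modnn. Qed.
Lemma nZ_4 : (nZ *+ 4 = 0)%R.
Proof. by apply: val_inj; rewrite ZvalMn ?H4n // val_nZ mulnC modnn. Qed.

Lemma k2D a b : k2 (a + b)%R = (k2 a + k2 b)%R.
Proof. by rewrite /k2 ZvalD ?Hn0 // -(mulrn_mod _ four_n) mulrnDr. Qed.
Lemma k2N a : k2 (- a)%R = (- k2 a)%R.
Proof.
rewrite /k2 ZvalN ?Hn0 // -(mulrn_mod _ four_n); apply/eqP; rewrite -subr_eq0 opprK.
by rewrite -mulrnDr subnK ?four_n // ltnW // Zlt ?Hn0.
Qed.

Lemma gmulE (a b : Gam) : (a * b)%g = ((a.1 + sgn_act a.2 b.1)%R, a.2 (+) b.2).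
Proof. by []. Qed.

Definition m4 (z : Zmod (4 * n)) := (val z %% 4)%N.
Lemma m4D x y : m4 (x + y)%R = ((m4 x + m4 y) %% 4)%N.
Proof. by rewrite /m4 ZvalD ?H4n // modn_dvdm ?dvdn_mulr // modnDm. Qed.
Lemma m4k2 c : m4 (k2 c) = 0%N.
Proof.
by rewrite /m4 /k2 ZvalMn ?H4n // val_four modn_dvdm ?dvdn_mulr // modnMr.
Qed.
Lemma m4nZ i : m4 (nZ *+ i)%R = ((n * i) %% 4)%N.
Proof. by rewrite /m4 ZvalMn ?H4n // val_nZ modn_dvdm ?dvdn_mulr. Qed.

Lemma n_mod4 : (n %% 4 = 1 \/ n %% 4 = 3)%N.
Proof.
have H : odd (n %% 4) by move: Hno; rewrite {1}(divn_eq n 4) oddD oddM andbF.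
have := ltn_pmod n (isT : 0 < 4); move: H.
by case: (n %% 4)%N => [|[|[|[|]]]] //; auto.
Qed.

Lemma mod4_inj i j : (i < 4 -> j < 4 -> (n * i) %% 4 = (n * j) %% 4 -> i = j)%N.
Proof.
rewrite -(modnMml n i) -(modnMml n j).
by case: n_mod4 => ->; case: i => [|[|[|[|i]]]] //; case: j => [|[|[|[|j]]]].
Qed.

Lemma k2_inj : injective k2.
Proof.
move=> c c' /(congr1 val); rewrite /k2 !ZvalMn ?H4n // val_four !modn_small.
- by move/eqP; rewrite eqn_pmul2l // => /eqP H; apply: val_inj.
- by rewrite ltn_pmul2l // Zlt ?Hn0.
- by rewrite ltn_pmul2l // Zlt ?Hn0.
Qed.

Lemma decomp_inj a a' d d' :
  (rot (kap a) * io d)%g = (rot (kap a') * io d')%g -> a = a' /\ d = d'.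
Proof.
case: a a' d d' => [a1 a2] [b1 b2] [i t] [j s] H.
have Et : t = s by have := congr1 (fun x => x.2) H.
have E1 : a1 = b1.
  by have := congr1 (fun x => x.1.1) H; rewrite /= !addr0.
have E2 : (k2 a2 + nZ *+ val i = k2 b2 + nZ *+ val j)%R.
  by have := congr1 (fun x => x.1.2) H.
have Eij : i = j.
  apply: val_inj; apply: mod4_inj; rewrite ?Zlt //.
  by have := congr1 m4 E2; rewrite !m4D !m4k2 !m4nZ !add0n !modn_mod.
subst; split => //; congr pair; apply: k2_inj; exact: (addIr _ E2).
Qed.

Lemma io_mul d e : io (d * e)%g = (io d * io e)%g.
Proof.
case: d e => [i t] [j s]; rewrite /io gmulE /=; congr pair; congr pair.
  by case: t; rewrite /= ?oppr0 addr0.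
rewrite (mulrn_mod _ nZ_4); case: t => /=.
- rewrite modn_mod modnDmr -(mulrn_mod _ nZ_4) mulrnDr.
  congr (_ + _)%R; apply/eqP; rewrite -subr_eq0 opprK -mulrnDr subnK ?nZ_4 //.
  exact: ltnW (Zlt _ _).
- by rewrite modn_mod -(mulrn_mod _ nZ_4) mulrnDr.
Qed.

Lemma rot_io d x : (io d * rot x)%g = (rot (sgn_act d.2 x) * io d)%g.
Proof. by rewrite !gmulE /= addrC addbF. Qed.

Lemma rotD x y : (rot x * rot y)%g = rot (x + y)%R.
Proof. by []. Qed.

Lemma kapD a b : kap (a + b)%R = (kap a + kap b)%R.
Proof. by rewrite /kap /= k2D. Qed.
Lemma kapN a : kap (- a)%R = (- kap a)%R.
Proof. by rewrite /kap /= k2N. Qed.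
Lemma kap0 : kap 0%R = 0%R.
Proof. by rewrite /kap /k2 /= mulr0n. Qed.
Definition sgnK (t : bool) (a : K) : K := if t then (- a)%R else a.
Lemma kap_sgn t a : kap (sgnK t a) = sgn_act t (kap a).
Proof. by case: t => //=; rewrite kapN. Qed.

Definition cprod (s : seq (K * D4)) : Gam :=
  foldr (fun e acc => (rot (kap e.1) * io e.2) * acc)%g 1%g s.
Definition comb (s : seq (K * D4)) : K :=
  foldr (fun e acc => e.1 + sgnK e.2.2 acc)%R 0%R s.
Definition dprod (s : seq (K * D4)) : D4 :=
  foldr (fun e acc => e.2 * acc)%g 1%g s.

Lemma cprodE s : cprod s = (rot (kap (comb s)) * io (dprod s))%g.
Proof.
elim: s => [|[a d] s IH] /=.
  by rewrite kap0; apply/eqP; rewrite /io /= mulr0n.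
rewrite IH mulgA -(mulgA (rot _)) rot_io mulgA rotD -mulgA -io_mul.
by rewrite kapD kap_sgn.
Qed.

Definition mkE (k v P : K) (e : spec) : K * D4 :=
  ((k *~ e.1.1.1 + v *~ e.1.1.2 + P *~ e.1.2)%R, e.2).
Lemma comb_cons e s : comb (e :: s) = (e.1 + sgnK e.2.2 (comb s))%R.
Proof. by []. Qed.
Lemma sums_cons l c p d s :
  [/\ Lsum ((l, c, p, d) :: s) = (l + sgz d.2 * Lsum s)%R,
      Csum ((l, c, p, d) :: s) = (c + sgz d.2 * Csum s)%R &
      Psum ((l, c, p, d) :: s) = (p + sgz d.2 * Psum s)%R].
Proof. by []. Qed.

Lemma lin3 (V : zmodType) (a b c x y z : V) :
  (a + b + c + (x + y + z) = (a + x) + (b + y) + (c + z))%R.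
Proof.
by rewrite addrACA (addrACA a).
Qed.

Lemma mulzD (V : zmodType) (x : V) (a b : int) : (x *~ (a + b) = x *~ a + x *~ b)%R.
Proof. exact: mulrzDr. Qed.

Lemma combE k v P s :
  comb (map (mkE k v P) s) = (k *~ Lsum s + v *~ Csum s + P *~ Psum s)%R.
Proof.
elim: s => [|[[[l c] p] d] s IH]; first by rewrite /= !mulr0z !addr0.
rewrite map_cons comb_cons IH; case: (sums_cons l c p d s) => -> -> ->.
rewrite (_ : mkE k v P (l,c,p,d) = ((k *~ l + v *~ c + P *~ p)%R, d)) //.
rewrite !mulzD; case: d => i [] /=.
- by rewrite !mulN1r !mulrNz !opprD lin3.
- by rewrite !mul1r lin3.
Qed.

Lemma dprodE k v P s : dprod (map (mkE k v P) s) = dprodS s.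
Proof. by elim: s => //= e s ->. Qed.

Definition PP : K := (inZp 2, 0)%R.
Definition vv : K := (- inZp 1, inZp 1)%R.

Section Des.
Variable des : design.
Hypothesis Hchk : chk_all des.

Definition colT j (x : K * D4) : Gam :=
  let e := mkE x.1 vv PP (specB des (x.1 == 0%R) j x.2) in (rot (kap e.1) * io e.2)%g.

Lemma big_foldr (F : nat -> Gam) s :
  (\prod_(j <- s) F j)%g = foldr (fun j acc => F j * acc)%g 1%g s.
Proof. by elim: s => [|j s IH]; rewrite ?big_nil ?big_cons ?IH. Qed.

Lemma cols_prod x : (\prod_(0 <= j < dJ des) colT j x)%g =
  (rot (kap (x.1 *~ Lsum (specs des (x.1 == 0%R) x.2) +
             vv *~ Csum (specs des (x.1 == 0%R) x.2) +
             PP *~ Psum (specs des (x.1 == 0%R) x.2)))%R *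
   io (dprodS (specs des (x.1 == 0%R) x.2)))%g.
Proof.
rewrite -combE -(dprodE x.1 vv PP) -cprodE big_foldr /specs /index_iota subn0.
by elim: (iota 0 (dJ des)) => //= j s ->.
Qed.

Lemma chk_Dinj j d1 d2 : j < dJ des -> tabD des j d1 = tabD des j d2 -> d1 = d2.
Proof.
case/and4P: Hchk => /allP H _ _ _ Hj E.
have := H j; rewrite mem_iota add0n => /(_ Hj) /allP /(_ d1 (all8P d1)) /allP.
by move=> /(_ d2 (all8P d2)) /andP [/implyP /(_ (introT eqP E)) /eqP].
Qed.
Lemma chk_Sinj j d1 d2 : j < dJ des -> tabS des j d1 = tabS des j d2 -> d1 = d2.
Proof.
case/and4P: Hchk => /allP H _ _ _ Hj E.
have := H j; rewrite mem_iota add0n => /(_ Hj) /allP /(_ d1 (all8P d1)) /allP.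
by move=> /(_ d2 (all8P d2)) /andP [_ /implyP /(_ (introT eqP E)) /eqP].
Qed.
Lemma chk_L j d (k : K) : j < dJ des -> (k *~ tabL des j d = 0)%R -> k = 0%R.
Proof.
case/and4P: Hchk => _ /allP H _ _ Hj.
have := H j; rewrite mem_iota add0n => /(_ Hj) /allP /(_ d (all8P d)).
case: k => a b.
rewrite !inE => /or4P [] /eqP ->; rewrite ?mulrNz ?mulr1z; try by move/eqP; rewrite ?oppr_eq0 => /eqP.
- move=> H2; have H2' : ((a, b) *+ 2 = 0)%R by [].
  rewrite mulr2n in H2'; have Ha : (a + a = 0)%R := congr1 fst H2'; have Hb : (b + b = 0)%R := congr1 snd H2'.
  by rewrite (Zdbl_inj Hm Hmo (etrans (mulr2n _) Ha)) (Zdbl_inj Hn0 Hno (etrans (mulr2n _) Hb)).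
- move/eqP; rewrite oppr_eq0 => /eqP H2'; change ((a, b) *+ 2 = 0)%R in H2'.
  rewrite mulr2n in H2'; have Ha : (a + a = 0)%R := congr1 fst H2'; have Hb : (b + b = 0)%R := congr1 snd H2'.
  by rewrite (Zdbl_inj Hm Hmo (etrans (mulr2n _) Ha)) (Zdbl_inj Hn0 Hno (etrans (mulr2n _) Hb)).
Qed.

Lemma colT_inj j : j < dJ des -> injective (colT j).
Proof.
move=> Hj [k1 d1] [k2 d2]; rewrite /colT /mkE /specB /= => /decomp_inj [EA Ed].
case: (eqVneq k1 0%R) => [E1|nz1]; case: (eqVneq k2 0%R) => [E2|nz2];
  rewrite ?E1 ?E2 ?eqxx ?(negbTE nz1) ?(negbTE nz2) /= in EA Ed *.
- by have := chk_Sinj Hj (chk_Dinj Hj Ed) => ->.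
- have E := chk_Dinj Hj Ed; rewrite E mul0rz in EA.
  move/addIr: EA => /addIr /esym /(chk_L Hj) E3.
  by rewrite E3 eqxx in nz2.
- have E := chk_Dinj Hj Ed; rewrite -E mul0rz in EA.
  move/addIr: EA => /addIr /(chk_L Hj) E3.
  by rewrite E3 eqxx in nz1.
- have E := chk_Dinj Hj Ed; subst d2.
  move/addIr: EA => /addIr /eqP; rewrite -subr_eq0 -mulrzBl => /eqP /(chk_L Hj).
  by move/eqP; rewrite subr_eq0 => /eqP ->.
Qed.

Lemma io1 : io 1%g = 1%g.
Proof. by rewrite /io /= mulr0n. Qed.

Lemma specs_chk d :
  [/\ Lsum (specs des false d) = 0%R, Csum (specs des false d) = 0%R,
      Psum (specs des false d) = 1%R & dprodS (specs des false d) = 1%g].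
Proof.
case/and4P: Hchk => _ _ /allP /(_ d (all8P d)) /and4P [/eqP-> /eqP-> /eqP-> /eqP->] _.
by [].
Qed.
Lemma specs_chkS d :
  [/\ Csum (specs des true d) = (if d == dec (dstar des) then 2 else 0)%R,
      Psum (specs des true d) = 1%R &
      dprodS (specs des true d) = if d == dec (dstar des) then zD else 1%g].
Proof.
case/and4P: Hchk => _ _ _ /allP /(_ d (all8P d)) /and3P [/eqP-> /eqP-> /eqP->].
by [].
Qed.

Lemma cols_nz k d : k != 0%R -> (\prod_(0 <= j < dJ des) colT j (k, d))%g = rot (kap PP).
Proof.
move=> nz; rewrite cols_prod /= (negbTE nz); case: (specs_chk d) => -> -> -> ->.
by rewrite io1 mulg1 mulr0z mulr1z !add0r.
Qed.

Lemma cols_z d : (\prod_(0 <= j < dJ des) colT j (0%R, d))%g =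
  if d == dec (dstar des) then (rot (kap (PP + vv *~ 2)%R) * io zD)%g else rot (kap PP).
Proof.
rewrite cols_prod /= eqxx; case: (specs_chkS d) => -> -> ->.
case: ifP => _; rewrite ?io1 ?mulg1 mul0rz mulr1z add0r ?mulr0z ?add0r //.
by rewrite addrC.
Qed.
End Des.

Lemma rot_expg x k : ((rot x) ^+ k)%g = rot (x *+ k)%R.
Proof.
elim: k => [|k IH]; first by rewrite expg0 mulr0n.
by rewrite expgS IH rotD mulrS.
Qed.

Lemma rot_eq1 x : (rot x == 1%g) = (x == 0%R).
Proof.
apply/eqP/eqP => [/(congr1 fst) //|->]; by [].
Qed.

Lemma order_rot x k : (#[rot x]%g %| k) = (x *+ k == 0)%R.
Proof. by rewrite order_dvdn rot_expg rot_eq1. Qed.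

Lemma pair_mulrn (a : Zmod m) (b : Zmod (4 * n)) k :
  (((a, b) : G) *+ k)%R = ((a *+ k)%R, (b *+ k)%R).
Proof. by elim: k => // k IH; rewrite !mulrS IH. Qed.

Lemma order_P : #[rot (kap PP)]%g = m.
Proof.
have H k : (#[rot (kap PP)]%g %| k) = (m %| k).
  rewrite order_rot /kap /= /k2 mulr0n pair_mulrn mul0rn.
  rewrite xpair_eqE eqxx andbT -val_eqE /= ZvalMn // ZvalInZp // modnMml.
  by rewrite -[(_ %% m == 0)]/(m %| 2 * k) Gauss_dvdr // coprimen2.
by apply/eqP; rewrite eqn_dvd H dvdnn -H dvdnn.
Qed.

Lemma special_val :
  (rot (kap (PP + vv *~ 2)%R) * io zD)%g = rot (0%R, (four *+ 2 + nZ *+ 2)%R).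
Proof.
rewrite gmulE /=; congr pair; rewrite /kap /PP /vv /=.
have E1 : (inZp 1 + inZp 1 = inZp 2 :> Zmod m)%R.
  by apply: val_inj; rewrite ZvalD // !ZvalInZp // modnDm.
have E2 : k2 (inZp 1) = four.
  rewrite /k2 ZvalInZp ?Hn0 // modn_small ?mulr1n //; exact: leq_trans Hn.
congr pair; rewrite /= ?addr0 ?add0r.
- by rewrite -opprD E1 subrr.
- by rewrite k2D E2 mulr2n.
Qed.

Lemma order_special : #[rot (0%R, (four *+ 2 + nZ *+ 2)%R)]%g = (2 * n)%N.
Proof.
have Hc : coprime (2 * n) (4 + n).
  rewrite coprimeMl coprime2n oddD Hno /= addnC.
  rewrite /coprime gcdnDl -/(coprime n 4) (_ : 4 = 2 ^ 2)%N //.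
  by rewrite coprime_pexpr // coprimen2.
have H k : (#[rot (0%R, (four *+ 2 + nZ *+ 2)%R)]%g %| k) = (2 * n %| k).
  rewrite order_rot pair_mulrn mul0rn xpair_eqE eqxx /= -val_eqE /=.
  rewrite ZvalMn ?H4n // ZvalD ?H4n // !ZvalMn ?H4n // val_four val_nZ modnDm modnMml.
  rewrite -[(_ %% (4 * n) == 0)]/(4 * n %| (4 * 2 + n * 2) * k).
  rewrite (_ : 4 * n = 2 * (2 * n))%N ?mulnA //.
  rewrite (_ : (4 * 2 + n * 2) * k = 2 * ((4 + n) * k))%N; last first.
    by rewrite -mulnDl mulnAC mulnC.
  by rewrite -mulnA dvdn_pmul2l // Gauss_dvdr.
by apply/eqP; rewrite eqn_dvd H dvdnn -H dvdnn.
Qed.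

Lemma gam_inj : injective gam.
Proof. by move=> [k d] [k1 d1] /decomp_inj /= [-> ->]. Qed.

Lemma tail1 J (y : Gam) q :
  (\prod_(J <= j < J + 2 * q) (if odd (j - J) then y^-1 else y))%g = 1%g.
Proof.
elim: q => [|q IH]; first by rewrite muln0 addn0 big_geq.
rewrite mulnS addnCA !addSn !big_nat_recr ?IH ?mul1g /=.
- by rewrite add0n subSn ?leq_addr // addKn oddS oddM /= mul1g mulgV.
- by rewrite add0n leq_addr.
- by rewrite add0n leqW // leq_addr.
Qed.

Section Des2.
Variable des : design.
Hypothesis Hchk : chk_all des.

Definition entry (x : K * D4) (j : nat) : Gam :=
  if j < dJ des then colT des j x else if odd (j - dJ des) then (gam x)^-1%g else gam x.

Lemma entry_inj j : injective (fun x => entry x j).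
Proof.
move=> x y; rewrite /entry; case: ifP => Hj; first exact: colT_inj.
case: ifP => _; [by move/invg_inj/gam_inj | exact: gam_inj].
Qed.

Definition spval : Gam := rot (0%R, (four *+ 2 + nZ *+ 2)%R).

Lemma row_prod g x : dJ des <= g -> ~~ odd (g - dJ des) ->
  (\prod_(j < g) entry x j)%g =
  if x == (0%R, dec (dstar des)) then spval else rot (kap PP).
Proof.
move=> HJ Hodd; rewrite -(big_mkord xpredT) (@big_cat_nat _ _ _ (dJ des)) //=.
have -> : (\prod_(dJ des <= j < g) entry x j)%g = 1%g.
  rewrite -(subnKC HJ) -[(g - dJ des)%N]odd_double_half (negbTE Hodd) add0n -mul2n.
  rewrite (eq_big_nat _ _ (F2 := fun j => if odd (j - dJ des) then (gam x)^-1%g else gam x)) ?tail1 //.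
  by move=> j /andP [Hj _]; rewrite /entry ltnNge Hj.
rewrite mulg1.
rewrite (eq_big_nat _ _ (F2 := fun j => colT des j x)); last first.
  by move=> j /andP [_ Hj]; rewrite /entry Hj.
case: x => k d; case: (eqVneq k 0%R) => [->|nz].
- by rewrite cols_z // xpair_eqE eqxx /= /spval -special_val.
- by rewrite cols_nz // xpair_eqE (negbTE nz).
Qed.
End Des2.
End Constr.

Lemma card_Zmod k : 0 < k -> #|{: Zmod k}| = k.
Proof. by case: k => // k _; rewrite card_ord. Qed.

Lemma cardD4 : #|{: D4}| = 8.
Proof.
have -> : #|{: D4}| = #|{: Zmod 4 * bool}| by [].
by rewrite card_prod card_bool card_Zmod.
Qed.

Notation Xt m n := ((Zmod m * Zmod n) * D4)%type.
Lemma card_X (m n : nat) : 0 < m -> 0 < n -> #|{: Xt m n}| = (m * n * 8)%N.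
Proof. by move=> Hm Hn; rewrite !card_prod !card_Zmod // card_bool. Qed.

Lemma cardG (m n : nat) : 0 < m -> 0 < n -> #|Gamma m n| = (m * (4 * n) * 2)%N.
Proof.
move=> Hm Hn.
have -> : #|Gamma m n| = #|{: (Zmod m * Zmod (4 * n)) * bool}| by [].
by rewrite !card_prod card_bool !card_Zmod // muln_gt0.
Qed.
Theorem mainTheorem12 (m n g : nat) :
  0 < m -> odd m -> 3 <= n -> odd n -> 3 <= g ->
  RSM_exists (Gamma m n) g (nseq (8 * m * n - 1) m ++ [:: 2 * n]).
Proof.
move=> Hm Hmo Hn Hno Hg.
pose des := if odd g then desO else desE.
have Hchk : chk_all des by rewrite /des; case: ifP => _; [exact: chkO | exact: chkE].
have HJ : dJ des <= g.
  rewrite /des; case: ifP => Ho //=; rewrite ltn_neqAle Hg andbT.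
  by apply/eqP => E; rewrite -E in Ho.
have Hev : ~~ odd (g - dJ des).
  by rewrite oddB // /des; case: (odd g).
have Hn0 : 0 < n by apply: leq_trans Hn.
have hX : #|Gamma m n| = #|{: Xt m n}|.
  rewrite cardG // card_X //.
  by rewrite -!mulnA; congr (_ * _)%N; rewrite mulnC -mulnA.
pose rowX (i : 'I_#|Gamma m n|) : Xt m n := enum_val (cast_ord hX i).
have rowX_inj : injective rowX by move=> i1 i2 /enum_val_inj /cast_ord_inj.
exists (\matrix_(i, j) @entry m n des (rowX i) j)%R; split.
  by move=> j i1 i2 /=; rewrite !mxE => /(entry_inj Hm Hmo Hn Hno Hchk) /rowX_inj.
pose x0 : Xt m n := (0%R, dec (dstar des)).
pose ordf (x : Xt m n) := if x == x0 then (2 * n)%N else m.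
have Hrow i : #[(\prod_(j < g) (\matrix_(i, j) @entry m n des (rowX i) j)%R i j)%g]%g = ordf (rowX i).
  rewrite (eq_bigr (fun j : 'I_g => @entry m n des (rowX i) j)); last by move=> j _; rewrite mxE.
  rewrite (row_prod Hm Hn Hchk) // /ordf /x0.
  case: ifP => _; [exact: order_special | exact: order_P].
rewrite (eq_map Hrow) map_comp.
apply: perm_trans (_ : perm_eq _ [seq ordf x | x <- enum {: Xt m n}]) _.
  apply: perm_map; apply: uniq_perm; rewrite ?(map_inj_uniq rowX_inj) ?enum_uniq //.
  move=> x; rewrite mem_enum; apply/idP/mapP; exists (cast_ord (esym hX) (enum_rank x)).
    by rewrite mem_enum.
  by rewrite /rowX cast_ordKV enum_rankK.
have x0in : x0 \in enum {: Xt m n} by rewrite mem_enum.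
apply: perm_trans (perm_map _ (perm_to_rem x0in)) _.
rewrite map_cons /ordf eqxx.
have -> : [seq (if x == x0 then (2 * n)%N else m) | x <- rem x0 (enum {: Xt m n})] =
          nseq (size (rem x0 (enum {: Xt m n}))) m.
  apply: (@eq_from_nth _ 0%N); rewrite ?size_map ?size_nseq // => i Hi.
  rewrite (nth_map x0) // nth_nseq Hi; case: eqP => // E.
  have := mem_nth x0 Hi; rewrite E mem_rem_uniq ?enum_uniq // inE eqxx //.
rewrite size_rem // -cardE -hX.
have -> : #|Gamma m n| = (8 * m * n)%N.
  by rewrite cardG // mulnCA mulnAC mulnA.
by rewrite -subn1 perm_sym perm_catC /= perm_refl.
Qed.
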